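(* Let $K=\{\sum_{i=1}^\infty a_i3^{-i}: a_i\in\{0,1\}\text{ for all } i\ge1\}$, and define $f,g\colon K\to\mathbb{R}$ by $f(x)=\sum_{i=1}^\infty a_{2i-1}3^{-i}$ and $g(x)=\sum_{i=1}^\infty a_{2i}3^{-i}$ for $x=\sum_{i=1}^\infty a_i3^{-i}\in K$. Then $f,g$ are continuous and \[ \overline{\dim}_B\operatorname{graph}(f+g)=\frac12+\frac{\log 2}{\log 3}>1,\qquad \overline{\dim}_B\operatorname{graph}(f)=\overline{\dim}_B\operatorname{graph}(g)=\frac{\log 8}{\log 9}<1. \]
   Context: $\operatorname{graph}(h)=\{(x,h(x)):x\in K\}\subset\mathbb{R}^2$ with the Euclidean metric. $\overline{\dim}_B$ denotes upper box dimension: for a non-empty bounded $X$, $\overline{\dim}_B X=\limsup_n \frac{\log N_n(X)}{n\log 2}$, where $N_n(X)$ is the maximal cardinality of a subset of $X$ whose points are pairwise at distance $>2^{-n}$. *)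

(* Defs.v *)
From Stdlib Require Import Reals Lra List ClassicalEpsilon.
Open Scope R_scope.

(* [cantor_digits a x] : x = sum_{i>=1} a_i 3^{-i}, digits a_i in {0,1}
   (encoded as booleans; a 0 is unused). *)
Definition digit (b : bool) : R := if b then 1 else 0.

Definition cantor_digits (a : nat -> bool) (x : R) : Prop :=
  infinite_sum (fun n => digit (a (S n)) / 3 ^ (S n)) x.

Definition K (x : R) : Prop := exists a : nat -> bool, cantor_digits a x.

(* Value of a convergent series (chosen by epsilon; unique when it exists). *)
Definition series_value (u : nat -> R) : R :=
  epsilon (inhabits 0) (fun l => infinite_sum u l).

(* A digit sequence of x (the unique one when x is in K). *)
Definition digits_of (x : R) : nat -> bool :=
  epsilon (inhabits (fun _ => false)) (fun a => cantor_digits a x).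

Definition fK (x : R) : R :=
  series_value (fun n => digit (digits_of x (2 * n + 1)%nat) / 3 ^ (S n)).
Definition gK (x : R) : R :=
  series_value (fun n => digit (digits_of x (2 * n + 2)%nat) / 3 ^ (S n)).

Definition continuous_on_K (h : R -> R) : Prop :=
  forall x, K x -> limit1_in h K (h x) x.

Definition graph (h : R -> R) (p : R * R) : Prop :=
  K (fst p) /\ snd p = h (fst p).

Definition dist2 (p q : R * R) : R :=
  sqrt ((fst p - fst q) ^ 2 + (snd p - snd q) ^ 2).

Definition separated (X : R * R -> Prop) (n : nat) (l : list (R * R)) : Prop :=
  NoDup l /\ (forall p, In p l -> X p) /\
  (forall p q, In p l -> In q l -> p <> q -> dist2 p q > / 2 ^ n).

Definition is_Nn (X : R * R -> Prop) (n m : nat) : Prop :=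
  (exists l, separated X n l /\ length l = m) /\
  (forall l, separated X n l -> (length l <= m)%nat).

Definition is_limsup (u : nat -> R) (L : R) : Prop :=
  forall eps, eps > 0 ->
    (exists N, forall n, (n >= N)%nat -> u n < L + eps) /\
    (forall N, exists n, (n >= N)%nat /\ u n > L - eps).

Definition upper_box_dim_eq (X : R * R -> Prop) (D : R) : Prop :=
  exists N : nat -> nat, (forall n, is_Nn X n (N n)) /\
    is_limsup (fun n => ln (INR (N n)) / (INR n * ln 2)) D.

(* Main.v *)
Require Import Defs.
From Stdlib Require Import Reals Lra List Lia Arith ClassicalEpsilon FunctionalExtensionality Classical.
Import ListNotations.
Open Scope R_scope.

Fixpoint PS (e : nat -> R) (m : nat) : R :=
  match m with O => 0 | S m' => PS e m' + e (S m') / 3 ^ (S m') end.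

Lemma pow3_pos n : 0 < 3 ^ n.
Proof. apply pow_lt; lra. Qed.

Lemma inv3S n : / 3 ^ S n = / 3 ^ n / 3.
Proof. simpl. field. apply Rgt_not_eq, pow3_pos. Qed.

Lemma tail_bound (e : nat -> R) (c : R) :
  (forall j, 0 <= e j <= c) ->
  forall m j, 0 <= PS e (m + j) - PS e m <= c / 2 * (/ 3 ^ m - / 3 ^ (m + j)).
Proof.
  intros He m j. induction j as [|j IH].
  - rewrite Nat.add_0_r. lra.
  - rewrite Nat.add_succ_r. cbn [PS]. rewrite (inv3S (m + j)).
    assert (Hp := pow3_pos (m + j)).
    assert (0 < / 3 ^ (m + j)) by (apply Rinv_0_lt_compat; lra).
    destruct (He (S (m + j))) as [H1 H2].
    assert (E3 : e (S (m + j)) / 3 ^ S (m + j) = e (S (m + j)) * (/ 3 ^ (m + j) / 3)).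
    { unfold Rdiv at 1. rewrite inv3S. reflexivity. }
    rewrite E3.
    set (t := / 3 ^ (m + j)) in *.
    assert (0 <= e (S (m + j)) * (t / 3) <= c * (t / 3)).
    { split. apply Rmult_le_pos; lra. apply Rmult_le_compat_r; lra. }
    assert (Eq : c / 2 * (/ 3 ^ m - t / 3) = c / 2 * (/ 3 ^ m - t) + c * (t / 3)) by (field; apply Rgt_not_eq, pow3_pos).
    rewrite Eq. lra.
Qed.

Lemma PS_le (e : nat -> R) (c : R) :
  (forall j, 0 <= e j <= c) -> forall m n, (m <= n)%nat ->
  PS e m <= PS e n <= PS e m + c / 2 * / 3 ^ m.
Proof.
  intros He m n Hmn. replace n with (m + (n - m))%nat by lia.
  pose proof (tail_bound e c He m (n - m)).
  assert (0 <= c) by (destruct (He O); lra).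
  assert (0 < / 3 ^ (m + (n - m))) by (apply Rinv_0_lt_compat, pow3_pos).
  assert (0 <= c/2 * / 3 ^ (m + (n - m))) by (apply Rmult_le_pos; lra).
  unfold Rdiv in *. nra.
Qed.

Lemma lim_le (u : nat -> R) l m B :
  Un_cv u l -> (forall n, (n >= m)%nat -> u n <= B) -> l <= B.
Proof.
  intros Hu HB. destruct (Rle_or_lt l B) as [|Hlt]; auto.
  destruct (Hu (l - B)) as [N HN]; [lra|].
  specialize (HN (max N m) ltac:(lia)). specialize (HB (max N m) ltac:(lia)).
  unfold R_dist in HN. apply Rabs_def2 in HN. lra.
Qed.

Lemma lim_ge (u : nat -> R) l m B :
  Un_cv u l -> (forall n, (n >= m)%nat -> B <= u n) -> B <= l.
Proof.
  intros Hu HB. destruct (Rle_or_lt B l) as [|Hlt]; auto.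
  destruct (Hu (B - l)) as [N HN]; [lra|].
  specialize (HN (max N m) ltac:(lia)). specialize (HB (max N m) ltac:(lia)).
  unfold R_dist in HN. apply Rabs_def2 in HN. lra.
Qed.

Lemma lim_abs_ge (u : nat -> R) l m B :
  Un_cv u l -> (forall n, (n >= m)%nat -> B <= Rabs (u n)) -> B <= Rabs l.
Proof.
  intros Hu HB. destruct (Rle_or_lt B (Rabs l)) as [|Hlt]; auto.
  destruct (Hu (B - Rabs l)) as [N HN]; [lra|].
  specialize (HN (max N m) ltac:(lia)). specialize (HB (max N m) ltac:(lia)).
  unfold R_dist in HN.
  pose proof (Rabs_triang (u (max N m) - l) l).
  replace (u (max N m) - l + l) with (u (max N m)) in H by ring. lra.
Qed.

Lemma PS_cv_ex (e : nat -> R) c : (forall j, 0 <= e j <= c) -> exists l, Un_cv (PS e) l.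
Proof.
  intros He. destruct (growing_cv (PS e)) as [l Hl].
  - intro n. destruct (PS_le e c He n (S n)); [lia|]. lra.
  - exists (c / 2). intros x [n ->]. destruct (PS_le e c He 0 n); [lia|]. simpl in *. lra.
  - exists l; exact Hl.
Qed.

Lemma PS_lim_bounds (e : nat -> R) c l : (forall j, 0 <= e j <= c) -> Un_cv (PS e) l ->
  forall m, PS e m <= l <= PS e m + c / 2 * / 3 ^ m.
Proof.
  intros He Hl m. split.
  - apply (lim_ge _ _ m _ Hl). intros n Hn. apply (PS_le e c He m n Hn).
  - apply (lim_le _ _ m _ Hl). intros n Hn. apply (PS_le e c He m n Hn).
Qed.

Lemma sum_PS (e : nat -> R) N :
  sum_f_R0 (fun n => e (S n) / 3 ^ S n) N = PS e (S N).
Proof. induction N; simpl in *. ring. rewrite IHN. reflexivity. Qed.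

Lemma cv_shift (e : nat -> R) l :
  infinite_sum (fun n => e (S n) / 3 ^ S n) l <-> Un_cv (PS e) l.
Proof.
  unfold infinite_sum. split; intros H eps Heps; destruct (H eps Heps) as [N HN].
  - exists (S N). intros n Hn. destruct n; [lia|]. rewrite <- sum_PS. apply HN. lia.
  - exists N. intros n Hn. rewrite sum_PS. apply HN. lia.
Qed.

Definition dg (a : nat -> bool) : nat -> R := fun i => digit (a i).

Lemma dg_bound a j : 0 <= dg a j <= 1.
Proof. unfold dg, digit. destruct (a j); lra. Qed.

Definition V (a : nat -> bool) : R :=
  series_value (fun n => digit (a (S n)) / 3 ^ S n).

Lemma series_value_spec u l : infinite_sum u l -> series_value u = l.
Proof.
  intros H. unfold series_value.
  assert (He : exists l, infinite_sum u l) by eauto.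
  pose proof (epsilon_spec (inhabits 0) (fun l => infinite_sum u l) He) as Hs.
  eapply uniqueness_sum; eauto.
Qed.

Lemma V_sum a : infinite_sum (fun n => digit (a (S n)) / 3 ^ S n) (V a).
Proof.
  destruct (PS_cv_ex (dg a) 1 (dg_bound a)) as [l Hl].
  apply cv_shift in Hl. unfold dg in Hl.
  unfold V. rewrite (series_value_spec _ l Hl). exact Hl.
Qed.

Lemma V_cv a : Un_cv (PS (dg a)) (V a).
Proof. apply cv_shift. exact (V_sum a). Qed.

Lemma V_bounds a m : PS (dg a) m <= V a <= PS (dg a) m + / 3 ^ m / 2.
Proof.
  pose proof (PS_lim_bounds (dg a) 1 (V a) (dg_bound a) (V_cv a) m). lra.
Qed.

Lemma PS_agree e1 e2 j : (forall i, (1 <= i <= j)%nat -> e1 i = e2 i) -> PS e1 j = PS e2 j.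
Proof.
  induction j; intros H; simpl. reflexivity.
  rewrite IHj by (intros; apply H; lia). rewrite (H (S j)) by lia. reflexivity.
Qed.

Lemma inv_pow_le m n : (m <= n)%nat -> / 3 ^ n <= / 3 ^ m.
Proof. intros. apply Rinv_le_contravar. apply pow3_pos. apply Rle_pow; [lra|lia]. Qed.

Lemma inv_pow_pos n : 0 < / 3 ^ n.
Proof. apply Rinv_0_lt_compat, pow3_pos. Qed.

Lemma gsep (e1 e2 : nat -> R) c j L :
  (forall i, 0 <= e1 i <= c) -> (forall i, 0 <= e2 i <= c) ->
  PS e1 j = PS e2 j -> 1 <= Rabs (e1 (S j) - e2 (S j)) -> (S j <= L)%nat ->
  / 3 ^ (S j) - c / 2 * (/ 3 ^ (S j) - / 3 ^ L) <= Rabs (PS e1 L - PS e2 L).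
Proof.
  intros H1 H2 Hj Hd HL.
  pose proof (tail_bound e1 c H1 (S j) (L - S j)) as T1.
  pose proof (tail_bound e2 c H2 (S j) (L - S j)) as T2.
  replace (S j + (L - S j))%nat with L in T1, T2 by lia.
  assert (E1 : PS e1 (S j) = PS e1 j + e1 (S j) * / 3 ^ S j) by reflexivity.
  assert (E2 : PS e2 (S j) = PS e2 j + e2 (S j) * / 3 ^ S j) by reflexivity.
  pose proof (inv_pow_pos (S j)).
  set (t := / 3 ^ S j) in *. set (T := c / 2 * (t - / 3 ^ L)) in *.
  assert (Hdt : t <= Rabs ((e1 (S j) - e2 (S j)) * t)).
  { rewrite Rabs_mult, (Rabs_right t) by lra. nra. }
  replace (PS e1 L - PS e2 L) with ((e1 (S j) - e2 (S j)) * t + ((PS e1 L - PS e1 (S j)) - (PS e2 L - PS e2 (S j)))) by (rewrite E1, E2, Hj; ring).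
  revert Hdt. set (d := (e1 (S j) - e2 (S j)) * t).
  intros Hdt.
  destruct (Rcase_abs d); [rewrite Rabs_left in Hdt by lra | rewrite Rabs_right in Hdt by lra];
  unfold Rabs; destruct Rcase_abs; lra.
Qed.

Lemma least (P : nat -> Prop) : (exists n, P n) -> exists n, P n /\ forall m, (m < n)%nat -> ~ P m.
Proof.
  intros [n Hn]. revert Hn. pattern n. apply (well_founded_ind lt_wf). clear n.
  intros n IH Hn. destruct (classic (exists m, (m < n)%nat /\ P m)) as [[m [Hm Pm]]|Hno].
  - exact (IH m Hm Pm).
  - exists n. split; auto. intros m Hm Pm. apply Hno. eauto.
Qed.

Lemma dg_diff a b i : a i <> b i -> 1 <= Rabs (dg a i - dg b i).
Proof.
  unfold dg, digit. destruct (a i), (b i); intros H; try congruence;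
  unfold Rabs; destruct Rcase_abs; lra.
Qed.

Lemma bool_eq_or (x y : bool) : x = y \/ x <> y.
Proof. destruct x, y; auto; right; congruence. Qed.

Lemma Vsep a b M : (exists i, (1 <= i <= M)%nat /\ a i <> b i) ->
  / 3 ^ M / 2 <= Rabs (V a - V b).
Proof.
  intros Hex. destruct (least _ Hex) as [i0 [[Hi0 Hd] Hmin]].
  destruct i0 as [|j]; [lia|].
  assert (Hag : PS (dg a) j = PS (dg b) j).
  { apply PS_agree. intros i Hi. unfold dg.
    destruct (bool_eq_or (a i) (b i)) as [E|E]; [rewrite E; reflexivity|].
    exfalso. apply (Hmin i); [lia|]. split; [lia|exact E]. }
  assert (Hl : / 3 ^ S j / 2 <= Rabs (V a - V b)).
  { apply (lim_abs_ge _ _ (S j) _ (CV_minus _ _ _ _ (V_cv a) (V_cv b))).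
    intros n Hn. pose proof (gsep _ _ 1 j n (dg_bound a) (dg_bound b) Hag (dg_diff a b _ Hd) Hn).
    pose proof (inv_pow_pos n). lra. }
  pose proof (inv_pow_le (S j) M (proj2 Hi0)). lra.
Qed.

Lemma Vclose a b m : (forall i, (1 <= i <= m)%nat -> a i = b i) -> Rabs (V a - V b) <= / 3 ^ m / 2.
Proof.
  intros H. assert (E : PS (dg a) m = PS (dg b) m) by (apply PS_agree; intros; unfold dg; rewrite H; auto).
  pose proof (V_bounds a m). pose proof (V_bounds b m). rewrite E in *.
  unfold Rabs; destruct Rcase_abs; lra.
Qed.

Lemma V_unique a b : V a = V b -> forall i, (1 <= i)%nat -> a i = b i.
Proof.
  intros E i Hi. destruct (bool_eq_or (a i) (b i)) as [|Hd]; auto. exfalso.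
  assert (H := Vsep a b i (ex_intro _ i (conj (conj Hi (le_n i)) Hd))).
  rewrite E, Rminus_diag, Rabs_R0 in H. pose proof (inv_pow_pos i). lra.
Qed.

Lemma V_ext a b : (forall i, (1 <= i)%nat -> a i = b i) -> V a = V b.
Proof.
  intros H. unfold V. f_equal. apply functional_extensionality. intros n. rewrite H by lia. reflexivity.
Qed.

Lemma Vfalse a L : (forall i, (L < i)%nat -> a i = false) -> V a = PS (dg a) L.
Proof.
  intros H. assert (Hc : forall n, (n >= L)%nat -> PS (dg a) n = PS (dg a) L).
  { intros n Hn. destruct (Nat.le_exists_sub L n Hn) as [p [-> _]]. rewrite Nat.add_comm. induction p as [|p IH].
    - rewrite Nat.add_0_r; reflexivity.
    - rewrite Nat.add_succ_r. cbn [PS]. rewrite IH by lia. unfold dg. rewrite H by lia. unfold digit. lra. }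
  apply Rle_antisym.
  - apply (lim_le _ _ L _ (V_cv a)). intros n Hn. rewrite (Hc n Hn). lra.
  - apply (lim_ge _ _ L _ (V_cv a)). intros n Hn. rewrite (Hc n Hn). lra.
Qed.

Lemma K_eq x : K x -> x = V (digits_of x).
Proof.
  intros Hx. unfold digits_of.
  pose proof (epsilon_spec (inhabits (fun _ => false)) (fun a => cantor_digits a x) Hx) as Hs.
  simpl in Hs. set (a := epsilon _ _) in *.
  eapply uniqueness_sum. exact Hs. exact (V_sum a).
Qed.

Lemma K_V a : K (V a).
Proof. exists a. exact (V_sum a). Qed.

Lemma digits_V a i : (1 <= i)%nat -> digits_of (V a) i = a i.
Proof.
  intros Hi. symmetry. apply V_unique; auto. apply K_eq, K_V.
Qed.

Definition oddd (a : nat -> bool) : nat -> bool := fun i => a (2 * i - 1)%nat.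
Definition evend (a : nat -> bool) : nat -> bool := fun i => a (2 * i)%nat.

Lemma fK_eq x : fK x = V (oddd (digits_of x)).
Proof.
  unfold fK, V. f_equal. apply functional_extensionality. intros n. unfold oddd.
  replace (2 * S n - 1)%nat with (2 * n + 1)%nat by lia. reflexivity.
Qed.

Lemma gK_eq x : gK x = V (evend (digits_of x)).
Proof.
  unfold gK, V. f_equal. apply functional_extensionality. intros n. unfold evend.
  replace (2 * S n)%nat with (2 * n + 2)%nat by lia. reflexivity.
Qed.

Lemma fK_V a : fK (V a) = V (oddd a).
Proof. rewrite fK_eq. apply V_ext. intros i Hi. unfold oddd. apply digits_V. lia. Qed.

Lemma gK_V a : gK (V a) = V (evend a).
Proof. rewrite gK_eq. apply V_ext. intros i Hi. unfold evend. apply digits_V. lia. Qed.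

Lemma INR_le_pow3 n : INR n <= 3 ^ n.
Proof.
  induction n. simpl; lra. rewrite S_INR. simpl.
  assert (1 <= 3 ^ n) by (apply (Rle_pow 3 0 n); [lra|lia]). lra.
Qed.

Lemma small_pow eps : 0 < eps -> exists m, / 3 ^ m < eps.
Proof.
  intros He. destruct (archimed_cor1 eps He) as [N [HN HN0]]. exists N.
  eapply Rle_lt_trans; [|exact HN]. apply Rinv_le_contravar.
  apply lt_0_INR; lia. apply INR_le_pow3.
Qed.

Lemma cont_gen (h : R -> R) (sel : (nat -> bool) -> nat -> bool) :
  (forall x, h x = V (sel (digits_of x))) ->
  (forall a b m, (forall i, (1 <= i <= 2 * m)%nat -> a i = b i) ->
     forall i, (1 <= i <= m)%nat -> sel a i = sel b i) ->
  continuous_on_K h.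
Proof.
  intros Hh Hsel x Kx. unfold limit1_in, limit_in. simpl. intros eps Heps.
  destruct (small_pow eps Heps) as [m Hm].
  exists (/ 3 ^ (2 * m) / 2). split. pose proof (inv_pow_pos (2 * m)); lra.
  intros y [Ky Hd]. unfold Rdist in *.
  rewrite (K_eq x Kx), (K_eq y Ky) in Hd.
  assert (Hag : forall i, (1 <= i <= 2 * m)%nat -> digits_of y i = digits_of x i).
  { intros i Hi. destruct (bool_eq_or (digits_of y i) (digits_of x i)) as [|Hne]; auto.
    exfalso. pose proof (Vsep _ _ (2 * m) (ex_intro _ i (conj Hi Hne))). lra. }
  rewrite !Hh. pose proof (Vclose _ _ m (Hsel _ _ m Hag)). pose proof (inv_pow_pos m). lra.
Qed.

Lemma cont_f : continuous_on_K fK.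
Proof.
  apply (cont_gen fK oddd fK_eq). intros a b m H i Hi. unfold oddd. apply H. lia.
Qed.

Lemma cont_g : continuous_on_K gK.
Proof.
  apply (cont_gen gK evend gK_eq). intros a b m H i Hi. unfold evend. apply H. lia.
Qed.

Fixpoint allv (bs : list nat) : list (list nat) :=
  match bs with
  | nil => [nil]
  | b :: bs' => flat_map (fun x => map (cons x) (allv bs')) (seq 0 b)
  end.

Lemma allv_in bs r : In r (allv bs) <-> Forall2 lt r bs.
Proof.
  revert r; induction bs as [|b bs IH]; intros r; simpl.
  - split. intros [<-|[]]. constructor. intros H; inversion H; auto.
  - rewrite in_flat_map. split.
    + intros [x [Hx Hr]]. apply in_map_iff in Hr. destruct Hr as [r' [<- Hr']].
      apply in_seq in Hx. constructor. lia. apply IH; auto.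
    + intros H. inversion H; subst. exists x. split. apply in_seq; lia.
      apply in_map. apply IH; auto.
Qed.

Lemma allv_length bs : length (allv bs) = fold_right Nat.mul 1%nat bs.
Proof.
  induction bs as [|b bs IH]; simpl. reflexivity.
  erewrite flat_map_constant_length; [|intros; apply length_map].
  rewrite length_seq, IH. reflexivity.

Qed.

Lemma nodup_fm (xs : list nat) (L : list (list nat)) :
  NoDup xs -> NoDup L -> NoDup (flat_map (fun x => map (cons x) L) xs).
Proof.
  intros Hx HL. induction Hx as [|x xs Hnin Hxs IH]; simpl. constructor.
  apply NoDup_app.
  - apply NoDup_map_NoDup_ForallPairs; auto. intros a b _ _ E. injection E; auto.
  - exact IH.
  - intros a Ha Hb. apply in_map_iff in Ha. destruct Ha as [r [<- _]].
    apply in_flat_map in Hb. destruct Hb as [y [Hy Hr]]. apply in_map_iff in Hr.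
    destruct Hr as [r' [E _]]. injection E; intros; subst. contradiction.
Qed.

Lemma allv_nodup bs : NoDup (allv bs).
Proof.
  induction bs; simpl. constructor. simpl; tauto. constructor.
  apply nodup_fm; auto. apply seq_NoDup.
Qed.

Lemma allv_nth bs r : In r (allv bs) ->
  length r = length bs /\ forall t, (t < length bs)%nat -> (nth t r 0 < nth t bs 0)%nat.
Proof.
  intros H. apply allv_in in H. induction H as [|x b r bs Hxb Hr IH]; simpl.
  - split; auto. intros; lia.
  - destruct IH as [IH1 IH2]. split. lia. intros [|t] Ht; auto. apply IH2. lia.
Qed.

Lemma dist2_refl p : dist2 p p = 0.
Proof. unfold dist2. replace ((fst p - fst p) ^ 2 + (snd p - snd p) ^ 2) with 0 by ring. apply sqrt_0. Qed.

Lemma pack_upper (X : R * R -> Prop) n (sg : R * R -> list nat) (bs : list nat) :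
  (forall p, X p -> In (sg p) (allv bs)) ->
  (forall p q, X p -> X q -> sg p = sg q -> dist2 p q <= / 2 ^ n) ->
  forall l, separated X n l -> (length l <= fold_right Nat.mul 1%nat bs)%nat.
Proof.
  intros Hin Hcl l [Hnd [HX Hsep]].
  rewrite <- allv_length, <- (length_map sg l).
  apply NoDup_incl_length.
  - apply NoDup_map_NoDup_ForallPairs; auto. intros p q Hp Hq E.
    destruct (classic (p = q)) as [|Hne]; auto. exfalso.
    specialize (Hsep p q Hp Hq Hne). specialize (Hcl p q (HX p Hp) (HX q Hq) E). lra.
  - intros s Hs. apply in_map_iff in Hs. destruct Hs as [p [<- Hp]]. apply Hin, HX, Hp.
Qed.

Lemma pack_lower (X : R * R -> Prop) n (pt : list nat -> R * R) (bs : list nat) :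
  (forall r, In r (allv bs) -> X (pt r)) ->
  (forall r1 r2, In r1 (allv bs) -> In r2 (allv bs) -> r1 <> r2 -> dist2 (pt r1) (pt r2) > / 2 ^ n) ->
  exists l, separated X n l /\ length l = fold_right Nat.mul 1%nat bs.
Proof.
  intros HX Hsep. exists (map pt (allv bs)). split; [|rewrite length_map; apply allv_length].
  assert (Hpos : 0 < / 2 ^ n) by (apply Rinv_0_lt_compat, pow_lt; lra).
  split; [|split].
  - apply NoDup_map_NoDup_ForallPairs; [|apply allv_nodup].
    intros r1 r2 H1 H2 E. destruct (classic (r1 = r2)) as [|Hne]; auto. exfalso.
    specialize (Hsep r1 r2 H1 H2 Hne). rewrite E, dist2_refl in Hsep. lra.
  - intros p Hp. apply in_map_iff in Hp. destruct Hp as [r [<- Hr]]. auto.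
  - intros p q Hp Hq Hne. apply in_map_iff in Hp. destruct Hp as [r1 [<- Hr1]].
    apply in_map_iff in Hq. destruct Hq as [r2 [<- Hr2]]. apply Hsep; auto.
    intros ->. apply Hne; reflexivity.
Qed.

Lemma max_exists (P : nat -> Prop) U : P 0%nat -> (forall m, P m -> (m <= U)%nat) ->
  exists m, P m /\ forall m', P m' -> (m' <= m)%nat.
Proof.
  revert P. induction U; intros P H0 HU.
  - exists 0%nat. split; auto.
  - destruct (classic (P (S U))) as [HS|HS].
    + exists (S U). split; auto.
    + apply IHU; auto. intros m Hm. specialize (HU m Hm).
      destruct (Nat.eq_dec m (S U)); [subst; contradiction|lia].
Qed.

Lemma Nn_exists X n U : (forall l, separated X n l -> (length l <= U)%nat) -> exists m, is_Nn X n m.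
Proof.
  intros HU.
  destruct (max_exists (fun m => exists l, separated X n l /\ length l = m) U) as [m [[l [Hl Hlen]] Hmax]].
  - exists nil. split; [|reflexivity]. split; [constructor|]. split; simpl; tauto.
  - intros m [l [Hl <-]]. auto.
  - exists m. split. eauto. intros l' Hl'. apply Hmax. eauto.
Qed.

Lemma lim_bounds (u : nat -> R) D A B : 0 <= A -> 0 <= B ->
  (forall n, (n >= 3)%nat -> D - A / INR n <= u n <= D + B / INR n) -> is_limsup u D.
Proof.
  intros HA HB H eps Heps.
  assert (Hq : 0 < eps / (A + B + 1)) by (apply Rdiv_lt_0_compat; lra).
  destruct (archimed_cor1 _ Hq) as [N0 [HN0 HN0p]].
  assert (Key : forall n, (n >= max N0 3)%nat -> D - eps < u n < D + eps).
  { intros n Hn. destruct (H n ltac:(lia)) as [H1 H2].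
    assert (Hn0 : 0 < INR N0) by (apply lt_0_INR; lia).
    assert (Hinv : / INR n <= / INR N0) by (apply Rinv_le_contravar; auto; apply le_INR; lia).
    assert (Hi : 0 < / INR n) by (apply Rinv_0_lt_compat, lt_0_INR; lia).
    assert (E : eps / (A + B + 1) * (A + B + 1) = eps) by (field; lra).
    unfold Rdiv in *.
    assert (A * / INR n <= A * (eps * / (A + B + 1))) by (apply Rmult_le_compat_l; lra).
    assert (B * / INR n <= B * (eps * / (A + B + 1))) by (apply Rmult_le_compat_l; lra).
    assert (0 < eps * / (A + B + 1)) by lra.
    nra. }
  split.
  - exists (max N0 3). intros n Hn. apply Key; auto.
  - intros N. exists (max N (max N0 3)). split. lia. apply Key. lia.
Qed.

Lemma ln_le' x y : 0 < x -> x <= y -> ln x <= ln y.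
Proof. intros Hx [H|H]. left; apply ln_increasing; auto. right; subst; auto. Qed.

Lemma ln_pos x : 1 < x -> 0 < ln x.
Proof. intros H. rewrite <- ln_1. apply ln_increasing; lra. Qed.

Lemma box_gen (X : R * R -> Prop) (c : nat) : (1 <= c)%nat ->
  (forall n k, 2 * 2 ^ n <= 9 ^ k -> forall l, separated X n l -> (length l <= (4 * c) ^ k)%nat) ->
  (forall n k, 2 * 9 ^ k < 2 ^ n -> exists l, separated X n l /\ length l = ((4 * c) ^ k)%nat) ->
  upper_box_dim_eq X (ln (INR (4 * c)) / ln 9).
Proof.
  intros Hc Hup Hlo.
  assert (Hbig : forall n, 2 * 2 ^ n <= 9 ^ S n).
  { intros n. simpl. assert (2 ^ n <= 9 ^ n) by (apply pow_incr; lra).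
    assert (0 < 2 ^ n) by (apply pow_lt; lra). lra. }
  assert (Hex : forall n, exists m, is_Nn X n m).
  { intros n. apply (Nn_exists X n ((4 * c) ^ S n)). apply Hup. apply Hbig. }
  set (N := fun n => proj1_sig (constructive_indefinite_description _ (Hex n))).
  assert (HN : forall n, is_Nn X n (N n)) by (intros n; exact (proj2_sig (constructive_indefinite_description _ (Hex n)))).
  exists N. split; auto.
  set (la := ln (INR (4 * c))). set (l2 := ln 2). set (l9 := ln 9).
  assert (Ha : 4 <= INR (4 * c)) by (replace 4 with (INR 4) by (simpl; lra); apply le_INR; lia).
  assert (Hla : 0 < la) by (apply ln_pos; lra).
  assert (Hl2 : 0 < l2) by (apply ln_pos; lra).
  assert (Hl9 : 0 < l9) by (apply ln_pos; lra).
  apply (lim_bounds _ _ (2 * la / l2) ((l2 + l9) * la / (l9 * l2))).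
  { apply Rlt_le, Rdiv_lt_0_compat; lra. }
  { apply Rlt_le, Rdiv_lt_0_compat. nra. nra. }
  intros n Hn3.
  destruct (least (fun k => 2 * 2 ^ n <= 9 ^ k) (ex_intro _ (S n) (Hbig n))) as [K0 [HK0 Hmin]].
  destruct (HN n) as [[l0 [Hl0 Hlen0]] Hmaxn].
  assert (Hupper : (N n <= (4 * c) ^ K0)%nat) by (rewrite <- Hlen0; apply (Hup n K0 HK0 l0 Hl0)).
  assert (H8 : 8 <= 2 ^ n) by (replace 8 with (2 ^ 3) by ring; apply Rle_pow; [lra|lia]).
  assert (HK2 : (2 <= K0)%nat).
  { destruct K0 as [|[|K0]]; simpl in HK0; try lra. lia. }
  assert (Hlow : ((4 * c) ^ (K0 - 2) <= N n)%nat).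
  { destruct (Hlo n (K0 - 2)%nat) as [l1 [Hl1 Hlen1]].
    - assert (Hm := Hmin (K0 - 1)%nat ltac:(lia)).
      apply Rnot_le_lt in Hm. replace (K0 - 1)%nat with (S (K0 - 2)) in Hm by lia. simpl in Hm.
      assert (0 < 9 ^ (K0 - 2)) by (apply pow_lt; lra). lra.
    - rewrite <- Hlen1. apply Hmaxn. exact Hl1. }
  set (x := INR n). set (t := INR K0). set (L := ln (INR (N n))).
  assert (Hx : 3 <= x) by (unfold x; replace 3 with (INR 3) by (simpl; lra); apply le_INR; lia).
  assert (HNpos : 1 <= INR (N n)).
  { replace 1 with (INR 1) by reflexivity. apply le_INR.
    eapply Nat.le_trans; [|exact Hlow].
    assert ((4 * c) ^ (K0 - 2) <> 0)%nat by (apply Nat.pow_nonzero; lia). lia. }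
  assert (HLu : L <= t * la).
  { unfold L, t, la. rewrite <- ln_pow by lra. apply ln_le'. lra. rewrite <- pow_INR. apply le_INR. exact Hupper. }
  assert (HLl : (t - 2) * la <= L).
  { unfold L, t, la. replace (INR K0 - 2) with (INR (K0 - 2)) by (rewrite minus_INR by lia; simpl; ring).
    rewrite <- ln_pow by lra. apply ln_le'. apply pow_lt; lra. rewrite <- pow_INR. apply le_INR. exact Hlow. }
  assert (HK1 : (x + 1) * l2 <= t * l9).
  { unfold x, t, l2, l9. rewrite <- S_INR, <- !ln_pow by lra. apply ln_le'. apply pow_lt; lra. simpl. lra. }
  assert (HK3 : (t - 1) * l9 < (x + 1) * l2).
  { unfold x, t, l2, l9. rewrite <- S_INR.
    replace (INR K0 - 1) with (INR (K0 - 1)) by (rewrite minus_INR by lia; simpl; ring).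
    rewrite <- !ln_pow by lra. apply ln_increasing. apply pow_lt; lra.
    assert (Hm := Hmin (K0 - 1)%nat ltac:(lia)). apply Rnot_le_lt in Hm. simpl. lra. }
  assert (Hden : 0 < x * l2) by nra.
  split.
  -
    assert (E : la / l9 - 2 * la / l2 / x = (la * x * l2 - 2 * la * l9) / (l9 * (x * l2))) by (field; lra).
    rewrite E. apply Rmult_le_reg_r with (x * l2); auto.
    replace (L / (x * l2) * (x * l2)) with L by (field; lra).
    replace ((la * x * l2 - 2 * la * l9) / (l9 * (x * l2)) * (x * l2)) with ((la * x * l2 - 2 * la * l9) / l9) by (field; lra).
    apply Rmult_le_reg_r with l9; auto.
    replace ((la * x * l2 - 2 * la * l9) / l9 * l9) with (la * x * l2 - 2 * la * l9) by (field; lra).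
    assert (la * (x + 1) * l2 <= la * t * l9) by (rewrite !Rmult_assoc; apply Rmult_le_compat_l; lra).
    assert ((t - 2) * la * l9 <= L * l9) by (apply Rmult_le_compat_r; lra).
    nra.
  -
    assert (E : la / l9 + (l2 + l9) * la / (l9 * l2) / x = (la * x * l2 + (l2 + l9) * la) / (l9 * (x * l2))) by (field; lra).
    rewrite E. apply Rmult_le_reg_r with (x * l2); auto.
    replace (L / (x * l2) * (x * l2)) with L by (field; lra).
    replace ((la * x * l2 + (l2 + l9) * la) / (l9 * (x * l2)) * (x * l2)) with ((la * x * l2 + (l2 + l9) * la) / l9) by (field; lra).
    apply Rmult_le_reg_r with l9; auto.
    replace ((la * x * l2 + (l2 + l9) * la) / l9 * l9) with (la * x * l2 + (l2 + l9) * la) by (field; lra).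
    assert (la * (t - 1) * l9 <= la * (x + 1) * l2) by (rewrite !Rmult_assoc; apply Rmult_le_compat_l; lra).
    assert (L * l9 <= t * la * l9) by (apply Rmult_le_compat_r; lra).
    nra.
Qed.

Lemma dist_le p q : dist2 p q <= Rabs (fst p - fst q) + Rabs (snd p - snd q).
Proof.
  unfold dist2. set (u := fst p - fst q). set (v := snd p - snd q).
  rewrite <- (sqrt_pow2 (Rabs u + Rabs v)) by (pose proof (Rabs_pos u); pose proof (Rabs_pos v); lra).
  apply sqrt_le_1_alt. rewrite <- (pow2_abs u), <- (pow2_abs v).
  pose proof (Rabs_pos u); pose proof (Rabs_pos v). nra.
Qed.

Lemma dist_ge_x p q : Rabs (fst p - fst q) <= dist2 p q.
Proof.
  unfold dist2. rewrite <- (sqrt_pow2 (Rabs _)) by apply Rabs_pos.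
  apply sqrt_le_1_alt. rewrite pow2_abs. pose proof (pow2_ge_0 (snd p - snd q)). lra.
Qed.

Lemma dist_ge_y p q : Rabs (snd p - snd q) <= dist2 p q.
Proof.
  unfold dist2. rewrite <- (sqrt_pow2 (Rabs _)) by apply Rabs_pos.
  apply sqrt_le_1_alt. rewrite pow2_abs. pose proof (pow2_ge_0 (fst p - fst q)). lra.
Qed.

Lemma graph_pt (h : R -> R) (H : (nat -> bool) -> R) :
  (forall a, h (V a) = H a) -> forall a, graph h (V a, H a).
Proof. intros Hh a. split; simpl. apply K_V. symmetry; apply Hh. Qed.

Lemma graph_inv (h : R -> R) (H : (nat -> bool) -> R) :
  (forall a, h (V a) = H a) -> forall p, graph h p ->
  p = (V (digits_of (fst p)), H (digits_of (fst p))).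
Proof.
  intros Hh [x y] [Kx Hy]. simpl in *. rewrite <- Hh, <- (K_eq x Kx). subst; reflexivity.
Qed.

Definition sig (psi : bool -> bool -> nat) (k : nat) (a : nat -> bool) : list nat :=
  map (fun i => Nat.b2n (a i)) (seq 1 (2 * k)) ++
  map (fun j => psi (a (2 * j - 1)%nat) (a (2 * j)%nat)) (seq (S k) k).

Definition bnd (c k : nat) : list nat := repeat 2%nat (2 * k) ++ repeat c k.

Lemma fold_repeat c n z : fold_right Nat.mul z (repeat c n) = (c ^ n * z)%nat.
Proof. induction n; simpl. lia. rewrite IHn. lia. Qed.

Lemma bnd_prod c k : fold_right Nat.mul 1%nat (bnd c k) = ((4 * c) ^ k)%nat.
Proof.
  unfold bnd. rewrite fold_right_app, !fold_repeat, Nat.pow_mul_l, Nat.pow_mul_r.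
  simpl (2 ^ 2)%nat. lia.
Qed.

Lemma Forall2_map_repeat (f : nat -> nat) c n start :
  (forall x, (f x < c)%nat) -> Forall2 lt (map f (seq start n)) (repeat c n).
Proof. revert start; induction n; intros start Hf; simpl; constructor; auto. Qed.

Lemma sig_in psi c k a : (forall x y, (psi x y < c)%nat) -> In (sig psi k a) (allv (bnd c k)).
Proof.
  intros Hpsi. apply allv_in. apply Forall2_app; apply Forall2_map_repeat; auto.
  intros x. destruct (a x); simpl; lia.
Qed.

Lemma map_eq_inv (g g' : nat -> nat) l : map g l = map g' l -> forall x, In x l -> g x = g' x.
Proof.
  induction l; simpl; intros E x Hx. destruct Hx.
  injection E; intros E2 E1. destruct Hx as [<-|Hx]; auto.
Qed.

Lemma map_app_inv (f f' g g' : nat -> nat) l1 l2 :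
  map f l1 ++ map g l2 = map f' l1 ++ map g' l2 ->
  (forall x, In x l1 -> f x = f' x) /\ (forall x, In x l2 -> g x = g' x).
Proof.
  induction l1; simpl; intros E.
  - split. intros _ []. apply map_eq_inv; auto.
  - injection E; intros E2 E1. destruct (IHl1 E2) as [H1 H2]. split; auto.
    intros x [<-|Hx]; auto.
Qed.

Lemma b2n_inj x y : Nat.b2n x = Nat.b2n y -> x = y.
Proof. destruct x, y; simpl; congruence. Qed.

Lemma sig_eq psi k a b : sig psi k a = sig psi k b ->
  (forall i, (1 <= i <= 2 * k)%nat -> a i = b i) /\
  (forall j, (k < j <= 2 * k)%nat -> psi (a (2 * j - 1)%nat) (a (2 * j)%nat) = psi (b (2 * j - 1)%nat) (b (2 * j)%nat)).
Proof.
  unfold sig. intros E. apply map_app_inv in E. destruct E as [E1 E2]. split.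
  - intros i Hi. apply b2n_inj. apply E1. apply in_seq. lia.
  - intros j Hj. apply E2. apply in_seq. lia.
Qed.

Lemma pow3_2k k : 3 ^ (2 * k) = 9 ^ k.
Proof. rewrite pow_mult. f_equal. ring. Qed.

Lemma upper_gen (h : R -> R) (H : (nat -> bool) -> R) (psi : bool -> bool -> nat) (c : nat) :
  (forall a, h (V a) = H a) -> (forall x y, (psi x y < c)%nat) ->
  (forall k a b, (forall i, (1 <= i <= 2 * k)%nat -> a i = b i) ->
     (forall j, (k < j <= 2 * k)%nat -> psi (a (2 * j - 1)%nat) (a (2 * j)%nat) = psi (b (2 * j - 1)%nat) (b (2 * j)%nat)) ->
     Rabs (H a - H b) <= / 3 ^ (2 * k)) ->
  forall n k, 2 * 2 ^ n <= 9 ^ k -> forall l, separated (graph h) n l -> (length l <= (4 * c) ^ k)%nat.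
Proof.
  intros Hh Hpsi Hcl n k Hnk l Hl. rewrite <- bnd_prod.
  apply (pack_upper (graph h) n (fun p => sig psi k (digits_of (fst p))) (bnd c k)); auto.
  - intros p _. apply sig_in; auto.
  - intros p q Hp Hq E. rewrite (graph_inv h H Hh p Hp), (graph_inv h H Hh q Hq).
    set (a := digits_of (fst p)) in *. set (b := digits_of (fst q)) in *.
    destruct (sig_eq _ _ _ _ E) as [E1 E2].
    pose proof (Vclose a b (2 * k) E1). pose proof (Hcl k a b E1 E2).
    pose proof (dist_le (V a, H a) (V b, H b)). cbn [fst snd] in *.
    rewrite pow3_2k in *.
    assert (0 < 2 ^ n) by (apply pow_lt; lra).
    assert (/ 9 ^ k <= / (2 * 2 ^ n)) by (apply Rinv_le_contravar; lra).
    assert (0 < / 2 ^ n) by (apply Rinv_0_lt_compat; lra).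
    rewrite Rinv_mult in *. lra.
Qed.

Definition dec (phi1 phi2 : nat -> bool) (k : nat) (r : list nat) (i : nat) : bool :=
  if (i <=? 2 * k)%nat then (nth (i - 1) r 0%nat =? 1)%nat
  else if (i <=? 4 * k)%nat then
    (let e := nth (k + Nat.div2 (S i) - 1) r 0%nat in if Nat.even i then phi2 e else phi1 e)
  else false.

Lemma dec_low phi1 phi2 k r i : (1 <= i <= 2 * k)%nat -> dec phi1 phi2 k r i = (nth (i - 1) r 0%nat =? 1)%nat.
Proof. intros Hi. unfold dec. destruct (Nat.leb_spec i (2 * k)); [reflexivity|lia]. Qed.

Lemma dec_high phi1 phi2 k r i : (4 * k < i)%nat -> dec phi1 phi2 k r i = false.
Proof.
  intros Hi. unfold dec. destruct (Nat.leb_spec i (2 * k)); [lia|].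
  destruct (Nat.leb_spec i (4 * k)); [lia|reflexivity].
Qed.

Lemma dec_odd phi1 phi2 k r j : (k < j <= 2 * k)%nat ->
  dec phi1 phi2 k r (2 * j - 1) = phi1 (nth (k + j - 1) r 0%nat).
Proof.
  intros Hj. destruct j as [|j']; [lia|].
  replace (2 * S j' - 1)%nat with (S (2 * j'))%nat by lia.
  unfold dec. destruct (Nat.leb_spec (S (2 * j')) (2 * k)); [lia|].
  destruct (Nat.leb_spec (S (2 * j')) (4 * k)); [|lia].
  replace (S (S (2 * j'))) with (2 * S j')%nat by lia. rewrite Nat.div2_double.
  replace (S (2 * j')) with (2 * j' + 1)%nat by lia. rewrite Nat.even_odd. reflexivity.
Qed.

Lemma dec_even phi1 phi2 k r j : (k < j <= 2 * k)%nat ->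
  dec phi1 phi2 k r (2 * j) = phi2 (nth (k + j - 1) r 0%nat).
Proof.
  intros Hj. unfold dec. destruct (Nat.leb_spec (2 * j) (2 * k)); [lia|].
  destruct (Nat.leb_spec (2 * j) (4 * k)); [|lia].
  rewrite Nat.div2_succ_double, Nat.even_even. reflexivity.
Qed.

Lemma nth_bnd_low c k t : (t < 2 * k)%nat -> nth t (bnd c k) 0%nat = 2%nat.
Proof. intros. unfold bnd. rewrite app_nth1 by (rewrite repeat_length; lia). apply nth_repeat_lt; lia. Qed.

Lemma nth_bnd_high c k t : (2 * k <= t < 3 * k)%nat -> nth t (bnd c k) 0%nat = c.
Proof.
  intros. unfold bnd. rewrite app_nth2 by (rewrite repeat_length; lia).
  rewrite repeat_length. apply nth_repeat_lt; lia.
Qed.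

Lemma bnd_length c k : length (bnd c k) = (3 * k)%nat.
Proof. unfold bnd. rewrite length_app, !repeat_length. lia. Qed.

Lemma lower_gen (h : R -> R) (H : (nat -> bool) -> R) (phi1 phi2 : nat -> bool) (c : nat) :
  (forall a, h (V a) = H a) ->
  (forall k r1 r2 t, In r1 (allv (bnd c k)) -> In r2 (allv (bnd c k)) ->
     (forall i, (1 <= i <= 2 * k)%nat -> dec phi1 phi2 k r1 i = dec phi1 phi2 k r2 i) ->
     (2 * k <= t < 3 * k)%nat -> nth t r1 0%nat <> nth t r2 0%nat ->
     / 3 ^ (2 * k) / 2 <= Rabs (H (dec phi1 phi2 k r1) - H (dec phi1 phi2 k r2))) ->
  forall n k, 2 * 9 ^ k < 2 ^ n -> exists l, separated (graph h) n l /\ length l = ((4 * c) ^ k)%nat.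
Proof.
  intros Hh Hsep n k Hnk. rewrite <- bnd_prod.
  apply (pack_lower (graph h) n (fun r => (V (dec phi1 phi2 k r), H (dec phi1 phi2 k r))) (bnd c k)).
  - intros r _. apply graph_pt; auto.
  - intros r1 r2 H1 H2 Hne.
    assert (Hb : / 2 ^ n < / 3 ^ (2 * k) / 2).
    { rewrite pow3_2k. unfold Rdiv. rewrite <- Rinv_mult. apply Rinv_lt_contravar.
      assert (0 < 9 ^ k) by (apply pow_lt; lra). assert (0 < 2 ^ n) by (apply pow_lt; lra). nra. lra. }
    destruct (allv_nth _ _ H1) as [L1 N1]. destruct (allv_nth _ _ H2) as [L2 N2].
    rewrite bnd_length in *.
    assert (Ht : exists t, (t < 3 * k)%nat /\ nth t r1 0%nat <> nth t r2 0%nat).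
    { apply NNPP. intros Hno. apply Hne. apply nth_ext with 0%nat 0%nat; [lia|].
      intros t Ht. apply NNPP. intros Hd. apply Hno. exists t. split; auto. lia. }
    destruct Ht as [t [Ht Hd]].
    destruct (classic (exists i, (1 <= i <= 2 * k)%nat /\ dec phi1 phi2 k r1 i <> dec phi1 phi2 k r2 i)) as [Hx|Hx].
    + pose proof (Vsep _ _ _ Hx). pose proof (dist_ge_x (V (dec phi1 phi2 k r1), H (dec phi1 phi2 k r1)) (V (dec phi1 phi2 k r2), H (dec phi1 phi2 k r2))).
      cbn [fst snd] in *. lra.
    + assert (Hag : forall i, (1 <= i <= 2 * k)%nat -> dec phi1 phi2 k r1 i = dec phi1 phi2 k r2 i).
      { intros i Hi. apply NNPP. intros Hd'. apply Hx. eauto. }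
      assert (Htk : (2 * k <= t)%nat).
      { destruct (Nat.le_gt_cases (2 * k) t) as [|Hlt]; auto. exfalso.
        specialize (Hag (S t) ltac:(lia)). rewrite !dec_low in Hag by lia.
        replace (S t - 1)%nat with t in Hag by lia.
        pose proof (N1 t Ht). pose proof (N2 t Ht). rewrite nth_bnd_low in * by lia.
        destruct (nth t r1 0%nat) as [|[|]], (nth t r2 0%nat) as [|[|]]; simpl in *; try lia; congruence. }
      pose proof (Hsep k r1 r2 t H1 H2 Hag (conj Htk Ht) Hd).
      pose proof (dist_ge_y (V (dec phi1 phi2 k r1), H (dec phi1 phi2 k r1)) (V (dec phi1 phi2 k r2), H (dec phi1 phi2 k r2))).
      cbn [fst snd] in *. lra.
Qed.

Lemma vals_lt c k r t : In r (allv (bnd c k)) -> (2 * k <= t < 3 * k)%nat -> (nth t r 0 < c)%nat.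
Proof.
  intros H Ht. destruct (allv_nth _ _ H) as [_ N]. rewrite bnd_length in N.
  specialize (N t ltac:(lia)). rewrite nth_bnd_high in N; auto.
Qed.

Definition psi_f (x y : bool) : nat := Nat.b2n x.
Definition phi_one (e : nat) : bool := (1 <=? e)%nat.
Definition phi_two (e : nat) : bool := (2 <=? e)%nat.
Definition phi_no (e : nat) : bool := false.

Lemma box_f : upper_box_dim_eq (graph fK) (ln (INR (4 * 2)) / ln 9).
Proof.
  apply box_gen. lia.
  - apply (upper_gen fK (fun a => V (oddd a)) psi_f 2 fK_V).
    + intros x y; unfold psi_f; destruct x; simpl; lia.
    + intros k a b E1 E2. eapply Rle_trans. apply (Vclose _ _ (2 * k)).
      2: { pose proof (inv_pow_pos (2 * k)). lra. }
      intros j Hj. unfold oddd. destruct (Nat.le_gt_cases j k).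
      * apply E1. lia.
      * apply b2n_inj. apply (E2 j). lia.
  - apply (lower_gen fK (fun a => V (oddd a)) phi_one phi_no 2 fK_V).
    intros k r1 r2 t H1 H2 Hag Ht Hd.
    apply Vsep. exists (t - k + 1)%nat. split. lia. unfold oddd.
    rewrite !dec_odd by lia. replace (k + (t - k + 1) - 1)%nat with t by lia.
    pose proof (vals_lt _ _ _ _ H1 Ht). pose proof (vals_lt _ _ _ _ H2 Ht).
    unfold phi_one. destruct (nth t r1 0%nat) as [|[|]], (nth t r2 0%nat) as [|[|]]; simpl; try lia; congruence.
Qed.

Definition psi_g (x y : bool) : nat := Nat.b2n y.

Lemma box_g : upper_box_dim_eq (graph gK) (ln (INR (4 * 2)) / ln 9).
Proof.
  apply box_gen. lia.
  - apply (upper_gen gK (fun a => V (evend a)) psi_g 2 gK_V).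
    + intros x y; unfold psi_g; destruct y; simpl; lia.
    + intros k a b E1 E2. eapply Rle_trans. apply (Vclose _ _ (2 * k)).
      2: { pose proof (inv_pow_pos (2 * k)). lra. }
      intros j Hj. unfold evend. destruct (Nat.le_gt_cases j k).
      * apply E1. lia.
      * apply b2n_inj. apply (E2 j). lia.
  - apply (lower_gen gK (fun a => V (evend a)) phi_no phi_one 2 gK_V).
    intros k r1 r2 t H1 H2 Hag Ht Hd.
    apply Vsep. exists (t - k + 1)%nat. split. lia. unfold evend.
    rewrite !dec_even by lia. replace (k + (t - k + 1) - 1)%nat with t by lia.
    pose proof (vals_lt _ _ _ _ H1 Ht). pose proof (vals_lt _ _ _ _ H2 Ht).
    unfold phi_one. destruct (nth t r1 0%nat) as [|[|]], (nth t r2 0%nat) as [|[|]]; simpl; try lia; congruence.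
Qed.

Definition psi_fg (x y : bool) : nat := (Nat.b2n x + Nat.b2n y)%nat.
Definition Ed (a : nat -> bool) : nat -> R := fun j => dg (oddd a) j + dg (evend a) j.

Lemma PS_add e1 e2 m : PS (fun j => e1 j + e2 j) m = PS e1 m + PS e2 m.
Proof. induction m; cbn [PS]. ring. rewrite IHm. field. apply Rgt_not_eq. apply (pow3_pos (S m)). Qed.

Lemma Ed_bound a j : 0 <= Ed a j <= 2.
Proof. unfold Ed. pose proof (dg_bound (oddd a) j). pose proof (dg_bound (evend a) j). lra. Qed.

Lemma Ed_diff a b j : Ed a j <> Ed b j -> 1 <= Rabs (Ed a j - Ed b j).
Proof.
  unfold Ed, dg, digit, oddd, evend.
  destruct (a (2 * j - 1)%nat), (a (2 * j)%nat), (b (2 * j - 1)%nat), (b (2 * j)%nat);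
  intros H; unfold Rabs; destruct Rcase_abs; lra.
Qed.

Lemma box_fg : upper_box_dim_eq (graph (fun x => fK x + gK x)) (ln (INR (4 * 3)) / ln 9).
Proof.
  assert (Hh : forall a, fK (V a) + gK (V a) = V (oddd a) + V (evend a)) by (intros; rewrite fK_V, gK_V; auto).
  apply box_gen. lia.
  - apply (upper_gen (fun x => fK x + gK x) (fun a => V (oddd a) + V (evend a)) psi_fg 3 Hh).
    + intros x y; unfold psi_fg; destruct x, y; simpl; lia.
    + intros k a b E1 E2.
      assert (HE : PS (Ed a) (2 * k) = PS (Ed b) (2 * k)).
      { apply PS_agree. intros j Hj. unfold Ed, dg, oddd, evend.
        destruct (Nat.le_gt_cases j k).
        - rewrite (E1 (2 * j - 1)%nat), (E1 (2 * j)%nat) by lia. reflexivity.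
        - specialize (E2 j ltac:(lia)). unfold psi_fg in E2.
          destruct (a (2 * j - 1)%nat), (a (2 * j)%nat), (b (2 * j - 1)%nat), (b (2 * j)%nat);
          simpl in *; try lia; lra. }
      unfold Ed in HE. rewrite !PS_add in HE.
      pose proof (V_bounds (oddd a) (2 * k)). pose proof (V_bounds (evend a) (2 * k)).
      pose proof (V_bounds (oddd b) (2 * k)). pose proof (V_bounds (evend b) (2 * k)).
      unfold Rabs; destruct Rcase_abs; lra.
  - apply (lower_gen (fun x => fK x + gK x) (fun a => V (oddd a) + V (evend a)) phi_one phi_two 3 Hh).
    intros k r1 r2 t H1 H2 Hag Ht Hd.
    set (a := dec phi_one phi_two k r1) in *. set (b := dec phi_one phi_two k r2) in *.
    assert (Hfin : forall a', (forall i, (4 * k < i)%nat -> a' i = false) ->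
       V (oddd a') + V (evend a') = PS (Ed a') (2 * k)).
    { intros a' Ha'. unfold Ed. rewrite PS_add. f_equal; apply Vfalse; intros i Hi;
      unfold oddd, evend; apply Ha'; lia. }
    rewrite (Hfin a), (Hfin b) by (intros; apply dec_high; auto).
    assert (Hj : exists J, (1 <= J <= 2 * k)%nat /\ Ed a J <> Ed b J).
    { exists (t - k + 1)%nat. split. lia. unfold Ed, dg, oddd, evend, a, b.
      rewrite !dec_odd, !dec_even by lia. replace (k + (t - k + 1) - 1)%nat with t by lia.
      pose proof (vals_lt _ _ _ _ H1 Ht). pose proof (vals_lt _ _ _ _ H2 Ht).
      unfold phi_one, phi_two, digit.
      destruct (nth t r1 0%nat) as [|[|[|]]], (nth t r2 0%nat) as [|[|[|]]]; simpl; try lia; try congruence; lra. }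
    destruct (least _ Hj) as [J [[HJ HJd] Hmin]].
    destruct J as [|J]; [lia|].
    assert (HP : PS (Ed a) J = PS (Ed b) J).
    { apply PS_agree. intros i Hi. apply NNPP. intros Hne. apply (Hmin i); [lia|]. split; [lia|auto]. }
    pose proof (gsep _ _ 2 J (2 * k) (Ed_bound a) (Ed_bound b) HP (Ed_diff _ _ _ HJd) (proj2 HJ)).
    pose proof (inv_pow_pos (2 * k)). lra.
Qed.

Lemma ln12 : ln (INR (4 * 3)) / ln 9 = 1 / 2 + ln 2 / ln 3.
Proof.
  replace (INR (4 * 3)) with (2 ^ 2 * 3) by (simpl; lra).
  replace 9 with (3 ^ 2) by lra.
  rewrite ln_mult, !ln_pow by lra. simpl.
  assert (0 < ln 3) by (apply ln_pos; lra). field. lra.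
Qed.

Lemma ln8 : ln (INR (4 * 2)) / ln 9 = ln 8 / ln 9.
Proof. replace (INR (4 * 2)) with 8 by (simpl; lra). reflexivity. Qed.

Theorem mainTheorem3 :
  continuous_on_K fK /\ continuous_on_K gK /\
  upper_box_dim_eq (graph (fun x => fK x + gK x)) (1 / 2 + ln 2 / ln 3) /\
  1 / 2 + ln 2 / ln 3 > 1 /\
  upper_box_dim_eq (graph fK) (ln 8 / ln 9) /\
  upper_box_dim_eq (graph gK) (ln 8 / ln 9) /\
  ln 8 / ln 9 < 1.
Proof.
  split; [exact cont_f|]. split; [exact cont_g|].
  split; [rewrite <- ln12; exact box_fg|].
  split.
  { assert (0 < ln 3) by (apply ln_pos; lra).
    assert (ln 3 < ln (2 ^ 2)) by (apply ln_increasing; lra).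
    rewrite ln_pow in H0 by lra. simpl in H0.
    apply Rlt_0_minus. replace (1 / 2 + ln 2 / ln 3 - 1) with ((2 * ln 2 - ln 3) / (2 * ln 3)) by (field; lra).
    apply Rdiv_lt_0_compat; lra. }
  split; [rewrite <- ln8; exact box_f|].
  split; [rewrite <- ln8; exact box_g|].
  assert (0 < ln 9) by (apply ln_pos; lra).
  assert (ln 8 < ln 9) by (apply ln_increasing; lra).
  apply Rmult_lt_reg_r with (ln 9); auto. unfold Rdiv. rewrite Rmult_assoc, Rinv_l by lra. lra.
Qed.
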